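(* Let $(X,d,b)$ be a bicomplete quasi-pseudometric type space. Let $J:X\to X$ be a continuous single-valued map such that $r\,d(x,y)\le d(Jx,Jy)$ for all $x,y\in X$, for some constant $r>0$, and let $F:X\to CB(X)$ be a set-valued map such that $$H(Fx,Fy)\le \alpha\big[d(Jx,Fx)+d(Jy,Fy)\big]\quad\text{for all }x,y\in X,$$ where $\alpha\in(0,1/2)$. Then for every $\varepsilon>0$, $$\delta(C_\varepsilon)\le \frac{b\varepsilon}{r}\,(1+b+2\alpha b).$$
   Context: A quasi-pseudometric type space $(X,d,b)$ consists of a nonempty set $X$, a constant $b\ge 1$ and a map $d:X\times X\to[0,\infty)$ with $d(x,x)=0$ and $d(x,z)\le b\,[d(x,y)+d(y,z)]$ for all $x,y,z\in X$. It is $T_0$ if $d(x,y)=0=d(y,x)$ implies $x=y$. Write $d^s(x,y)=\max\{d(x,y),d(y,x)\}$; the space is bicomplete if it is $T_0$ and every $d^s$-Cauchy sequence converges in $d^s$. For $x\in X$ and nonempty $A\subseteq X$: $d(x,A)=\inf_{a\in A}d(x,a)$, $d(A,x)=\inf_{a\in A}d(a,x)$; for nonempty $A,B$: $H(A,B)=\max\{\sup_{a\in A}d(a,B),\sup_{b'\in B}d(A,b')\}$. $CB(X)$ denotes the nonempty $d^s$-bounded, $d^s$-closed subsets; continuity of $J$ is with respect to $d^s$. For $\varepsilon>0$, $C_\varepsilon=\{x\in X:\sup_{y\in Fx}d^s(Jx,y)\le\varepsilon\}$, and for $A\subseteq X$, $\delta(A)=\sup_{x,y\in A}d(x,y)$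 (the diameter). *)

(* Defs.v *)
From Stdlib Require Import Reals Lra ClassicalEpsilon.
Open Scope R_scope.

Section QPM.
Variable X : Type.
Variable d : X -> X -> R.

Definition qpm_type (b : R) : Prop :=
  1 <= b /\
  (forall x y, 0 <= d x y) /\
  (forall x, d x x = 0) /\
  (forall x y z, d x z <= b * (d x y + d y z)).

Definition T0 : Prop := forall x y, d x y = 0 -> d y x = 0 -> x = y.

Definition ds (x y : X) : R := Rmax (d x y) (d y x).

Definition ds_converges (u : nat -> X) (x : X) : Prop :=
  forall eps, 0 < eps -> exists N, forall n, (n >= N)%nat -> ds (u n) x < eps.

Definition ds_Cauchy (u : nat -> X) : Prop :=
  forall eps, 0 < eps -> exists N, forall n m, (n >= N)%nat -> (m >= N)%nat ->
    ds (u n) (u m) < eps.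

Definition bicomplete : Prop :=
  T0 /\ forall u, ds_Cauchy u -> exists x, ds_converges u x.

Definition ds_continuous (J : X -> X) : Prop :=
  forall u x, ds_converges u x -> ds_converges (fun n => J (u n)) (J x).

Definition ds_bounded (A : X -> Prop) : Prop :=
  exists M, forall x y, A x -> A y -> ds x y <= M.

Definition ds_closed (A : X -> Prop) : Prop :=
  forall u x, (forall n, A (u n)) -> ds_converges u x -> A x.

Definition CB (A : X -> Prop) : Prop :=
  (exists a, A a) /\ ds_bounded A /\ ds_closed A.

(* infimum of a set of reals (meaningful when nonempty and bounded below) *)
Definition is_glb (S : R -> Prop) (m : R) : Prop :=
  (forall s, S s -> m <= s) /\ (forall m', (forall s, S s -> m' <= s) -> m' <= m).

Definition Rinf (S : R -> Prop) : R :=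
  epsilon (inhabits 0) (fun m => is_glb S m).

Definition dist_pt_set (x : X) (A : X -> Prop) : R :=
  Rinf (fun r => exists a, A a /\ r = d x a).
Definition dist_set_pt (A : X -> Prop) (x : X) : R :=
  Rinf (fun r => exists a, A a /\ r = d a x).

(* H(A,B) <= c, with H the sup of d(a,B) and d(A,b') (unfolded) *)
Definition H_le (A B : X -> Prop) (c : R) : Prop :=
  (forall a, A a -> dist_pt_set a B <= c) /\
  (forall b', B b' -> dist_set_pt A b' <= c).

Definition C_eps (J : X -> X) (F : X -> X -> Prop) (eps : R) (x : X) : Prop :=
  forall y, F x y -> ds (J x) y <= eps.

Definition diam_le (A : X -> Prop) (c : R) : Prop :=
  forall x y, A x -> A y -> d x y <= c.

End QPM.

(* Main.v *)
Require Import Defs.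
From Stdlib Require Import Reals.
From Stdlib Require Import Lra ClassicalEpsilon.
Open Scope R_scope.

Lemma glb_exists (S : R -> Prop) : (exists s, S s) -> (forall s, S s -> 0 <= s) ->
  exists m, is_glb S m.
Proof.
  intros [s0 Hs0] Hpos.
  destruct (completeness (fun t => exists s, S s /\ t = - s)) as [l [Hub Hl]].
  - exists 0. intros t [s [Hs ->]]. specialize (Hpos s Hs). lra.
  - exists (- s0). eauto.
  - exists (- l). split.
    + intros s Hs. assert (- s <= l) by (apply Hub; eauto). lra.
    + intros m' Hm'. assert (l <= - m'); [|lra].
      apply Hl. intros t [s [Hs ->]]. specialize (Hm' s Hs). lra.
Qed.

Lemma Rinf_spec (S : R -> Prop) : (exists s, S s) -> (forall s, S s -> 0 <= s) ->
  is_glb S (Rinf S).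
Proof.
  intros H1 H2. unfold Rinf. apply epsilon_spec. apply glb_exists; auto.
Qed.

Theorem mainTheorem13 (X : Type) (d : X -> X -> R) (b : R)
  (HX : inhabited X)
  (Hqpm : qpm_type X d b)
  (Hbic : bicomplete X d)
  (J : X -> X) (F : X -> X -> Prop) (r alpha : R)
  (HJc : ds_continuous X d J)
  (Hr : 0 < r)
  (HJ : forall x y, r * d x y <= d (J x) (J y))
  (HF : forall x, CB X d (F x))
  (Halpha : 0 < alpha /\ alpha < 1 / 2)
  (HH : forall x y, H_le X d (F x) (F y)
          (alpha * (dist_pt_set X d (J x) (F x) + dist_pt_set X d (J y) (F y)))) :
  forall eps, 0 < eps ->
    diam_le X d (C_eps X d J F eps) (b * eps / r * (1 + b + 2 * alpha * b)).
Proof.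
  intros eps Heps x y Cx Cy.
  destruct Hqpm as [Hb [Hnn [Hdiag Htri]]].
  assert (Hglb : forall z A, (exists a, A a) -> is_glb (fun t => exists a, A a /\ t = d z a)
                                    (dist_pt_set X d z A)).
  { intros z A [a Ha]. unfold dist_pt_set. apply Rinf_spec.
    - exists (d z a). eauto.
    - intros s [a' [_ ->]]. apply Hnn. }
  assert (Hds : forall u v, d u v <= ds X d u v) by (intros; unfold ds; apply Rmax_l).
  assert (HD : forall z, C_eps X d J F eps z -> dist_pt_set X d (J z) (F z) <= eps).
  { intros z Cz. destruct (HF z) as [[a Ha] _].
    destruct (Hglb (J z) (F z) (ex_intro _ a Ha)) as [H1 _].
    apply Rle_trans with (d (J z) a). apply H1. eauto.
    apply Rle_trans with (ds X d (J z) a); auto. }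
  destruct (HF x) as [[u Hu] _].
  destruct (HF y) as [[v0 Hv0] _].
  assert (Hdu : d (J x) u <= eps) by (apply Rle_trans with (ds X d (J x) u); auto).
  assert (HdvJ : forall v, F y v -> d v (J y) <= eps).
  { intros v Hv. apply Rle_trans with (ds X d (J y) v); auto.
    unfold ds. apply Rmax_r. }
  assert (Huy : d u (J y) <= b * (dist_pt_set X d u (F y) + eps)).
  { destruct (Hglb u (F y) (ex_intro _ v0 Hv0)) as [_ H2].
    assert (d u (J y) / b - eps <= dist_pt_set X d u (F y)).
    { apply H2. intros s [v [Hv ->]].
      assert (d u (J y) <= b * (d u v + d v (J y))) by apply Htri.
      assert (d v (J y) <= eps) by auto.
      assert (d u (J y) / b <= d u v + eps).
      { apply Rmult_le_reg_l with b. lra. field_simplify; [|lra].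
        assert (b * d v (J y) <= b * eps) by (apply Rmult_le_compat_l; lra). lra. }
      lra. }
    assert (d u (J y) / b * b = d u (J y)) by (field; lra).
    assert (d u (J y) <= (dist_pt_set X d u (F y) + eps) * b).
    { rewrite <- H0. apply Rmult_le_compat_r; lra. }
    lra. }
  assert (HuF : dist_pt_set X d u (F y) <= 2 * alpha * eps).
  { destruct (HH x y) as [H1 _]. eapply Rle_trans. apply H1. auto.
    pose proof (HD x Cx). pose proof (HD y Cy).
    assert (0 <= dist_pt_set X d (J x) (F x)).
    { destruct (Hglb (J x) (F x) (ex_intro _ u Hu)) as [_ H2]. apply H2.
      intros s [a [_ ->]]. apply Hnn. }
    nra. }
  assert (HJxy : d (J x) (J y) <= b * (d (J x) u + d u (J y))) by apply Htri.
  assert (Hfin : d (J x) (J y) <= b * eps * (1 + b + 2 * alpha * b)).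
  { assert (d u (J y) <= b * (2 * alpha * eps + eps)).
    { eapply Rle_trans. apply Huy. apply Rmult_le_compat_l; lra. }
    assert (b * (d (J x) u + d u (J y)) <= b * (eps + b * (2 * alpha * eps + eps))).
    { apply Rmult_le_compat_l; lra. }
    nra. }
  specialize (HJ x y).
  apply Rmult_le_reg_l with r; auto.
  replace (r * (b * eps / r * (1 + b + 2 * alpha * b))) with (b * eps * (1 + b + 2 * alpha * b))
    by (field; lra).
  lra.
Qed.
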